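(* Let $k,n$ be positive integers with $k\leqslant n$ and let $C\in\mathrm{Conf}([n]^k_<)$ be a shelling order. Then its promotion $\partial_D C$ is a shelling order.
   Context: $[n]:=\{1,\ldots,n\}$; $[n]^k_<$ denotes the set of $k$-element subsets of $[n]$. $\mathrm{Conf}([n]^k_<)$ is the set of tuples $C=(C_1,\ldots,C_h)$, $h\geqslant1$, of pairwise distinct elements of $[n]^k_<$. $C$ is a shelling order if for all $i<j$ in $[h]$ there exists $z<j$ with $|C_z\cap C_j|=k-1$ and $C_i\cap C_j\subseteq C_z\cap C_j$. The dual graph $D(C)$ is the graph on vertex set $[h]$ with $\{i,j\}$ an edge iff $|C_i\cap C_j|=k-1$. For a graph $G$ on vertex set $[h]$, its track $T_G=\{v_1,\ldots,v_r\}$ is defined by $v_1=1$ and, for $i\geqslant 2$, $v_i=\min\{j\in[h]: j>v_{i-1},\ \{v_{i-1},j\}\text{ an edge}\}$ if this minimum exists, otherwise $r=i-1$. The promotion of $G$ is the permutation $\partial_G\in S_h$ with $\partial_G(i)=i-1$ for $i\notin T_G$, $\partial_G(v_j)=v_{j+1}-1$ for $j\in[r-1]$, and $\partial_G(v_r)=h$. For $\sigma\in S_h$ set $\sigma C:=(C_{\sigma^{-1}(1)},\ldots,C_{\sigma^{-1}(h)})$. The promotion of $C$ is $\partial_D C:=\partial_{D(C)}C$. *)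

(* Defs.v *)
From mathcomp Require Import all_boot.
Set Implicit Arguments. Unset Strict Implicit. Unset Printing Implicit Defensive.

(* Indices are 1-based as in the paper: a configuration C = (C_1,...,C_h)
   is a sequence of k-subsets of [n] = 'I_n, and C_i := nth set0 C (i-1). *)
Definition cat_at n (C : seq {set 'I_n}) (i : nat) : {set 'I_n} := nth set0 C i.-1.

Definition is_conf n (k : nat) (C : seq {set 'I_n}) : Prop :=
  [/\ 0 < size C, all (fun A : {set 'I_n} => #|A| == k) C & uniq C].

Definition shelling n (k : nat) (C : seq {set 'I_n}) : Prop :=
  forall i j, 1 <= i -> i < j -> j <= size C ->
    exists z, [/\ 1 <= z, z < j,
      #|cat_at C z :&: cat_at C j| = k.-1 &
      cat_at C i :&: cat_at C j \subset cat_at C z :&: cat_at C j].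

Definition dual_graph n (k : nat) (C : seq {set 'I_n}) : rel nat :=
  fun i j => #|cat_at C i :&: cat_at C j| == k.-1.

Definition next_track (h : nat) (e : rel nat) (v : nat) : option nat :=
  if [seq j <- iota v.+1 (h - v) | e v j] is w :: _ then Some w else None.

Fixpoint track_from (h : nat) (e : rel nat) (fuel v : nat) : seq nat :=
  match fuel with
  | 0 => [:: v]
  | fuel'.+1 =>
      match next_track h e v with
      | Some w => v :: track_from h e fuel' w
      | None => [:: v]
      end
  end.

(* T_G = (v_1, ..., v_r), v_1 = 1; fuel h suffices since the v_i increase. *)
Definition track (h : nat) (e : rel nat) : seq nat := track_from h e h 1.

Definition promotion (h : nat) (e : rel nat) (i : nat) : nat :=
  let T := track h e in
  if i \in T then
    let j := index i T in
    if j.+1 < size T then (nth 0 T j.+1).-1 else h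
  else i.-1.

(* sigma C := (C_{sigma^-1(1)}, ..., C_{sigma^-1(h)}) for a permutation
   sigma of [h] given as a function on nat; sigma^-1(m) is the i in [h]
   with sigma i = m. *)
Definition perm_inv (h : nat) (sigma : nat -> nat) (m : nat) : nat :=
  nth 0 (iota 1 h) (find (fun i => sigma i == m) (iota 1 h)).

Definition perm_act n (sigma : nat -> nat) (C : seq {set 'I_n}) : seq {set 'I_n} :=
  [seq cat_at C (perm_inv (size C) sigma m) | m <- iota 1 (size C)].

Definition promoteD n (k : nat) (C : seq {set 'I_n}) : seq {set 'I_n} :=
  perm_act (promotion (size C) (dual_graph k C)) C.

(* Main.v *)
Require Import Defs.
From mathcomp Require Import all_boot zify.
Set Implicit Arguments. Unset Strict Implicit. Unset Printing Implicit Defensive.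

Record good (h : nat) (T : pred nat) (nt : nat -> nat) (e : rel nat) : Prop := Good {
  g1 : T 1;
  g2 : forall i, T i -> 1 <= i <= h;
  g3 : forall i, i <= h -> i < nt i /\ nt i <= h.+1;
  g4 : forall i, nt i <= h -> T (nt i);
  g5 : forall i u, T u -> i < u -> nt i <= u;
  g6 : forall t j, T t -> t < j <= h -> e t j -> nt t <= j }.

Definition sig (T : pred nat) (nt : nat -> nat) i :=
  if T i then (nt i).-1 else i.-1.


Lemma sig_range h T nt e i : good h T nt e -> 1 <= i <= h -> 1 <= sig T nt i <= h.
Proof.
case=> T1 Th N1 N1' N2 P1 hi; rewrite /sig.
case: ifP => Ti.
  have := N1 i; lia.
have : i != 1 by apply/eqP => E; rewrite E T1 in Ti.
lia.
Qed.

Lemma sig_inj h T nt e i i' : good h T nt e -> 1 <= i <= h -> 1 <= i' <= h ->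
  sig T nt i = sig T nt i' -> i = i'.
Proof.
move=> G; wlog: i i' / i <= i'.
  move=> W hi hi' E; case: (leqP i i') => H; first exact: W.
  by symmetry; apply: W => //; apply: ltnW.
case: G => T1 Th N1 N1' N2 P1 le hi hi'; rewrite /sig.
have := N1 i; have := N1 i'.
case: (ltngtP i i') le => // lt _.
case Ti: (T i); case Ti': (T i') => A B.
- have := N2 i i' Ti' lt. lia.
- move=> E. have E' : nt i = i' by lia.
  have := N1' i; rewrite E' Ti'. lia.
- lia.
- have : i != 1 by apply/eqP => E; rewrite E T1 in Ti.
  have : i' != 1 by apply/eqP => E; rewrite E T1 in Ti'.
  lia.
Qed.

Lemma sig_A h T nt e z b : good h T nt e -> 1 <= z -> z < b -> b <= h -> e z b ->
  sig T nt z < sig T nt b.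
Proof.
case=> T1 Th N1 N1' N2 P1 z1 zb bh ezb; rewrite /sig.
have := N1 z; have := N1 b.
case Tb: (T b); case Tz: (T z) => A B.
- have := N2 z b Tb zb. lia.
- lia.
- have := P1 z b Tz. rewrite zb bh ezb => /(_ erefl erefl) H.
  have : nt z != b.
    apply/eqP => E. have := N1' z. rewrite E Tb. lia.
  lia.
- lia.
Qed.

Lemma sig_B h T nt e b c : good h T nt e -> 1 <= b -> b < c -> c <= h ->
  sig T nt c < sig T nt b ->
  ~~ e b c /\ (forall z, 1 <= z -> z < c -> z != b -> sig T nt z < sig T nt b).
Proof.
case=> T1 Th N1 N1' N2 P1 b1 bc ch; rewrite /sig.
have := N1 c; have := N1 b.
case Tb: (T b); case Tc: (T c) => A B.
- have := N2 b c Tc bc. lia.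
- move=> H; split.
    apply/negP => ebc. have := P1 b c Tb. rewrite bc ch ebc => /(_ erefl erefl). lia.
  move=> z z1 zc zb. have := N1 z. case Tz: (T z) => D.
    case: (ltngtP z b) zb => // zb' _.
      have := N2 z b Tb zb'. lia.
    have := N2 b z Tz zb'. lia.
  lia.
- lia.
- lia.
Qed.

Lemma next_trackS h e v w : next_track h e v = Some w ->
  [/\ v < w, w <= h, e v w & forall j, v < j <= h -> e v j -> w <= j].
Proof.
rewrite /next_track.
have srt : sorted ltn [seq j <- iota v.+1 (h - v) | e v j].
  exact: (sorted_filter ltn_trans _ (iota_ltn_sorted _ _)).
have mem j : (j \in [seq j <- iota v.+1 (h - v) | e v j]) = e v j && (v < j <= h).
  rewrite mem_filter mem_iota; congr (_ && _).
  apply/idP/idP; lia.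
case E: [seq j <- iota v.+1 (h - v) | e v j] srt mem => [|w' l] // srt mem [<-].
have := mem w'; rewrite inE eqxx /= => /esym/andP[evw /andP[vw wh]].
split=> // j jr ej.
have := mem j; rewrite ej jr inE => /orP[/eqP -> //|jl].
have := order_path_min ltn_trans srt => /allP /(_ _ jl).
exact: ltnW.
Qed.

Lemma next_trackN h e v : next_track h e v = None ->
  forall j, v < j <= h -> ~~ e v j.
Proof.
rewrite /next_track => E j jr; apply/negP => ej.
have : j \in [seq j <- iota v.+1 (h - v) | e v j].
  rewrite mem_filter ej mem_iota /=. lia.
by case: [seq j <- iota v.+1 (h - v) | e v j] E.
Qed.

Lemma track_from_spec h e f v : 1 <= v -> v <= h -> h <= v + f ->
  exists s, [/\ track_from h e f v = v :: s, path ltn v s, all (fun u => u <= h) s &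
   forall t j, t \in v :: s -> t < j <= h -> e t j -> exists2 u, u \in v :: s & t < u <= j].
Proof.
elim: f v => [|f IH] v v1 vh hf /=.
  exists [::]; split => // t j; rewrite inE => /eqP -> . lia.
case N: (next_track h e v) => [w|].
  have [vw wh evw wmin] := next_trackS N.
  have [s [E p a P]] := IH w (leq_trans v1 (ltnW vw)) wh ltac:(lia).
  exists (w :: s); rewrite E; split => //=; first by rewrite vw.
    by rewrite wh.
  move=> t j; rewrite inE => /orP[/eqP -> jr ej|ts jr ej].
    exists w; first by rewrite !inE eqxx orbT.
    by rewrite vw wmin.
  have [u us tu] := P t j ts jr ej.
  by exists u => //; rewrite inE us orbT.
exists [::]; split => // t j; rewrite inE => /eqP -> jr ej.
by have := next_trackN N jr; rewrite ej.
Qed.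

Definition ntf h (T : seq nat) i := nth h.+1 T (find (fun u => i < u) T).

Lemma find_sorted s x : sorted ltn s -> x \in s ->
  find (fun u => x < u) s = (index x s).+1.
Proof.
elim: s => [|y s IH] //= srt; rewrite inE.
case: (y =P x) => [E _|ne].
  subst y; rewrite ltnn /= ?eqxx; congr S.
  by case: s srt {IH} => //= y' s' /andP[H _]; rewrite H.
case/orP => [/eqP E|xs]; first by case: ne.
have yx : y < x.
  have := order_path_min ltn_trans srt => /allP /(_ _ xs). done.

rewrite ltnNge (ltnW yx) /=; congr S.
exact: IH (path_sorted srt) xs.
Qed.

Lemma ntf_min h s i u : sorted ltn s -> u \in s -> i < u -> ntf h s i <= u.
Proof.
rewrite /ntf; elim: s => [|y s IH] //= srt; rewrite inE.
case: ifP => iy.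
  move=> /orP[/eqP -> //|us] _.
  by have := order_path_min ltn_trans srt => /allP /(_ _ us) /ltnW.
move=> /orP[/eqP E|us] iu; first by rewrite -E iu in iy.
exact: IH (path_sorted srt) us iu.
Qed.

Lemma ntf_spec h s i : i <= h -> all (fun u => u <= h) s ->
  [/\ i < ntf h s i, ntf h s i <= h.+1 & (ntf h s i <= h -> ntf h s i \in s)].
Proof.
rewrite /ntf => ih al.
case: (boolP (has (fun u => i < u) s)) => H.
  have fs : find (fun u => i < u) s < size s by rewrite -has_find.
  have m := mem_nth h.+1 fs.
  split => //; first exact: (nth_find h.+1 H).
  by have := allP al _ m => /leqW.
rewrite nth_default; last by rewrite (hasNfind H).
split => //; lia.
Qed.

Lemma ntf_mem h s i : ntf h s i <= h -> ntf h s i \in s.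
Proof.
rewrite /ntf => H.
case: (boolP (has (fun u => i < u) s)) => Hs.
  by apply: mem_nth; rewrite -has_find.
by move: H; rewrite nth_default ?ltnn // (hasNfind Hs).
Qed.

Lemma track_good h e : 1 <= h ->
  good h (fun i => i \in track h e) (ntf h (track h e)) e /\
  forall i, promotion h e i = sig (fun i => i \in track h e) (ntf h (track h e)) i.
Proof.
move=> h1.
have [s [E p a P]] := track_from_spec e (leqnn 1) h1 (leq_addl _ _).
rewrite /track E.
have srt : sorted ltn (1 :: s) by [].
have al : all (fun u => u <= h) (1 :: s) by rewrite /= h1.
split.
  split.
  - by rewrite inE eqxx.
  - move=> i; rewrite inE => /orP[/eqP -> |iS]; first by rewrite h1.
    have := order_path_min ltn_trans p => /allP /(_ _ iS) /ltnW ->.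
    exact: (allP a _ iS).
  - move=> i ih; have [? ? _] := ntf_spec ih al; done.
  - move=> i; exact: ntf_mem.
  - move=> i u us iu; exact: ntf_min srt us iu.
  - move=> t j ts jr ej. have [u us /andP[tu uj]] := P t j ts jr ej.
    exact: leq_trans (ntf_min h srt us tu) uj.
move=> i; rewrite /promotion /sig /track E.
case: ifP => // iT.
rewrite /ntf (find_sorted srt iT).
case: ltnP => H; first by rewrite (set_nth_default h.+1).
by rewrite nth_default.
Qed.

Lemma pinv_spec h (p : nat -> nat) m :
  (forall i, 1 <= i <= h -> 1 <= p i <= h) ->
  (forall i i', 1 <= i <= h -> 1 <= i' <= h -> p i = p i' -> i = i') ->
  1 <= m <= h -> 1 <= perm_inv h p m <= h /\ p (perm_inv h p m) = m.
Proof.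
move=> Hr Hi hm.
have inj : {in iota 1 h &, injective p}.
  move=> x y; rewrite !mem_iota => hx hy; apply: Hi; lia.
have U : uniq (map p (iota 1 h)) by rewrite (map_inj_in_uniq inj) iota_uniq.
have S : {subset map p (iota 1 h) <= iota 1 h}.
  move=> x /mapP[y]; rewrite !mem_iota => hy ->; have := Hr y; lia.
have [_ eqs] := uniq_min_size U S ltac:(by rewrite size_map).
have : m \in map p (iota 1 h) by rewrite eqs mem_iota; lia.
move=> mm.
have H : has (fun i => p i == m) (iota 1 h).
  by case/mapP: mm => y yi ->; apply/hasP; exists y.
have fs : find (fun i => p i == m) (iota 1 h) < size (iota 1 h) by rewrite -has_find.
have := nth_find 0 H; rewrite /perm_inv => /eqP ->; split => //.
have := mem_nth 0 fs; rewrite mem_iota; set x := nth _ _ _; lia.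
Qed.

Lemma pinv_p h (p : nat -> nat) i :
  (forall i, 1 <= i <= h -> 1 <= p i <= h) ->
  (forall i i', 1 <= i <= h -> 1 <= i' <= h -> p i = p i' -> i = i') ->
  1 <= i <= h -> perm_inv h p (p i) = i.
Proof.
move=> Hr Hi hi.
have [h1 h2] := pinv_spec Hr Hi (Hr i hi).
exact: Hi h1 hi h2.
Qed.

Lemma main_claim k n (C : seq {set 'I_n}) (p : nat -> nat) :
  shelling k C ->
  (forall z b, 1 <= z -> z < b -> b <= size C -> dual_graph k C z b -> p z < p b) ->
  (forall b c, 1 <= b -> b < c -> c <= size C -> p c < p b ->
     ~~ dual_graph k C b c /\ (forall z, 1 <= z -> z < c -> z != b -> p z < p b)) ->
  forall b c, 1 <= b <= size C -> 1 <= c <= size C -> p c < p b ->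
  exists d, [/\ 1 <= d <= size C, p d < p b, #|cat_at C d :&: cat_at C b| = k.-1 &
     cat_at C c :&: cat_at C b \subset cat_at C d :&: cat_at C b].
Proof.
move=> Sh HA HB b c hb; elim/ltn_ind: c => c IH hc pcb.
case: (ltngtP c b) => cb.
- have [z [z1 zb ezb sub]] := Sh c b (proj1 (andP hc)) cb (proj2 (andP hb)).
  exists z; split => //; first lia.
  by apply: HA => //; [lia | apply/eqP].
- have [nebc Hz] := HB b c (proj1 (andP hb)) cb (proj2 (andP hc)) pcb.
  have [z [z1 zc ezc sub]] := Sh b c (proj1 (andP hb)) cb (proj2 (andP hc)).
  have zb : z != b.
    apply/eqP => E; subst z; move: nebc; rewrite /dual_graph.
    by rewrite ezc eqxx.
  have pzb := Hz z z1 zc zb.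
  have [d [hd pdb edb sub2]] := IH z zc ltac:(lia) pzb.
  exists d; split => //.
  apply: subset_trans sub2.
  apply/subsetP => x; rewrite !inE => /andP[xc xb].
  have := subsetP sub x; rewrite !inE xb xc => /(_ erefl) /andP[-> _].
  by [].
- by subst c; rewrite ltnn in pcb.
Qed.

Theorem theorem5p4 (k n : nat) (C : seq {set 'I_n}) :
  0 < k -> k <= n -> is_conf k C -> shelling k C ->
  is_conf k (promoteD k C) /\ shelling k (promoteD k C).
Proof.
move=> k0 kn [h1 allk uC] Sh.
set h := size C in h1.
set e := dual_graph k C.
set p := promotion h e.
have [G Hp] := track_good e h1.
have Hr : forall i, 1 <= i <= h -> 1 <= p i <= h.
  by move=> i hi; rewrite /p Hp; apply: sig_range G hi.
have Hi : forall i i', 1 <= i <= h -> 1 <= i' <= h -> p i = p i' -> i = i'.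
  by move=> i i' hi hi'; rewrite /p !Hp; apply: sig_inj G hi hi'.
have HA : forall z b, 1 <= z -> z < b -> b <= size C -> dual_graph k C z b -> p z < p b.
  by move=> z b z1 zb bh ezb; rewrite /p !Hp; apply: sig_A G z1 zb bh ezb.
have HB : forall b c, 1 <= b -> b < c -> c <= size C -> p c < p b ->
     ~~ dual_graph k C b c /\ (forall z, 1 <= z -> z < c -> z != b -> p z < p b).
  move=> b c b1 bc ch; rewrite /p !Hp => H.
  have [H1 H2] := sig_B G b1 bc ch H.
  by split => // z z1 zc zb; rewrite Hp; apply: H2.
have PD : promoteD k C = [seq cat_at C (perm_inv h p m) | m <- iota 1 h] by [].
have sz : size (promoteD k C) = h by rewrite PD size_map size_iota.
have cat' : forall m, 1 <= m <= h -> cat_at (promoteD k C) m = cat_at C (perm_inv h p m).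
  move=> m hm; rewrite PD /cat_at (nth_map 0); last by rewrite size_iota; lia.
  rewrite nth_iota; last lia. by have -> : 1 + m.-1 = m by lia.
have inC : forall i, 1 <= i <= h -> cat_at C i \in C.
  by move=> i hi; rewrite /cat_at mem_nth //; rewrite -/h; lia.
split.
  split; first by rewrite sz.
    apply/allP => A /mapP[m]; rewrite mem_iota => hm ->.
    have [hq _] := pinv_spec Hr Hi (m := m) ltac:(lia).
    exact: (allP allk _ (inC _ hq)).
  rewrite map_inj_in_uniq ?iota_uniq //.
  move=> m m'; rewrite !mem_iota => hm hm' E.
  have [hq Eq] := pinv_spec Hr Hi (m := m) ltac:(lia).
  have [hq' Eq'] := pinv_spec Hr Hi (m := m') ltac:(lia).
  have : (perm_inv h p m).-1 = (perm_inv h p m').-1.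
    apply/eqP; rewrite -(nth_uniq set0 _ _ uC); [exact/eqP/E | move: hq; rewrite -/h; lia | move: hq'; rewrite -/h; lia].
  move=> E2.
  have E3 : perm_inv h p m = perm_inv h p m' by lia.
  by rewrite -Eq -Eq' E3.
rewrite /shelling sz => i j i1 ij jh.
have [ha Ea] := pinv_spec Hr Hi (m := i) ltac:(lia).
have [hb Eb] := pinv_spec Hr Hi (m := j) ltac:(lia).
have [d [hd pdb edb sub]] :=
  main_claim Sh HA HB hb ha ltac:(rewrite Ea Eb; exact: ij).
exists (p d); rewrite Eb in pdb; have := Hr d hd => hpd.
rewrite !cat' //; try lia.
rewrite (pinv_p Hr Hi hd).
split => //; lia.
Qed.
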